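(* Let $(S,\mathfrak{n})$ be a complete Noetherian local ring with coefficient field $k$, $\Gamma$ a standard set of monomials in $k[T_1,\dots,T_r]$, and $I$ an $\mathfrak{n}$-primary ideal with a generating sequence $x_1,\dots,x_r$ which is $\Gamma$-expandable. Let $f_1,\dots,f_l\in S$ be such that their images form a $k$-basis of $S/I$. For a positive integer $t$ put $A_{1,t}=\{f_iu(x)\mid 1\le i\le l,\ u\in\Gamma,\ f_iu(x)\notin\mathfrak{n}^t\}$ and $A_{2,t}=\{f_iu(x)\mid 1\le i\le l,\ u\in\Gamma,\ \operatorname{ord}(f_i)+\sum_j\operatorname{ord}(x_j)\deg_{T_j}(u)<t\}$. Then: (1) $S/\mathfrak{n}^t$ is spanned over $k$ by the images of $A_{1,t}$; (2) $A_{1,t}\subseteq A_{2,t}$, so $S/\mathfrak{n}^t$ is spanned by the images of $A_{2,t}$; (3) if $A_{2,t}$ is $k$-linearly independent modulo $\mathfrak{n}^t$, then its image is a $k$-basis of $S/\mathfrak{n}^t$ and $\dim_kS/\mathfrak{n}^t=|A_{2,t}|$.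
   Context: $\operatorname{ord}(f)$ for $f\ne0$ is the integer $t$ with $f\in\mathfrak{n}^t\setminus\mathfrak{n}^{t+1}$ ($\infty$ for $f=0$). A standard set is a set of monomials closed under taking divisors. For $u=T_1^{a_1}\cdots T_r^{a_r}$, $u(x)=x_1^{a_1}\cdots x_r^{a_r}$. A lifting is a map $\sigma:S/I\to S$ with $\sigma(0)=0$ and $\pi\circ\sigma=\mathrm{id}_{S/I}$. $x_1,\dots,x_r$ is $\Gamma$-expandable if for every lifting $\sigma$ every $f\in S$ has a unique representation $f=\sum_{u\in\Gamma}f_uu(x)$ (convergent sum) with all $f_u\in\sigma(S/I)$. *)

(* Defs.v *)
From mathcomp Require Import all_boot all_order all_algebra.
From Stdlib Require Import ClassicalEpsilon.
Set Implicit Arguments. Unset Strict Implicit. Unset Printing Implicit Defensive.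
Import GRing.Theory.
Local Open Scope ring_scope.

Section Defs.
Variable S : comNzRingType.

Definition is_ideal (J : S -> Prop) : Prop :=
  [/\ J 0, (forall a b, J a -> J b -> J (a + b)) & (forall a b, J b -> J (a * b))].

Definition proper_ideal (J : S -> Prop) : Prop := is_ideal J /\ ~ J 1.

Fixpoint idpow (J : S -> Prop) (t : nat) : S -> Prop :=
  match t with
  | 0 => fun _ => True
  | t'.+1 => fun y => exists s : seq (S * S),
      (forall p, p \in s -> idpow J t' p.1 /\ J p.2) /\ y = \sum_(p <- s) p.1 * p.2
  end.

Definition is_local (n : S -> Prop) : Prop :=
  proper_ideal n /\ forall J, proper_ideal J -> forall a, J a -> n a.

Definition noetherian : Prop :=
  forall J : S -> Prop, is_ideal J -> exists g : seq S,
    forall y, J y <-> exists c : 'I_(size g) -> S, y = \sum_(i < size g) c i * g`_i.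

(* n-adically complete (and separated): S -> lim S/n^t is an isomorphism *)
Definition adic_complete (n : S -> Prop) : Prop :=
  (forall a : nat -> S,
     (forall t, exists N, forall m p, (N <= m)%N -> (N <= p)%N -> idpow n t (a m - a p)) ->
     exists L, forall t, exists N, forall m, (N <= m)%N -> idpow n t (a m - L))
  /\ (forall y, (forall t, idpow n t y) -> y = 0).

(* k is a coefficient field: iota : k -> S, and k -> S/n is bijective *)
Definition coefficient_field (k : fieldType) (iota : {rmorphism k -> S}) (n : S -> Prop) :=
  forall s : S, exists c : k, n (s - iota c) /\ forall c', n (s - iota c') -> c' = c.

Definition primary_ideal (I : S -> Prop) : Prop :=
  proper_ideal I /\ forall a b, I (a * b) -> ~ I a -> exists m, I (b ^+ m).
Definition is_primary_for (n I : S -> Prop) : Prop :=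
  primary_ideal I /\ forall a, n a <-> exists m, I (a ^+ m).

Definition generates (r : nat) (x : 'I_r -> S) (I : S -> Prop) : Prop :=
  forall y, I y <-> exists c : 'I_r -> S, y = \sum_(i < r) c i * x i.

Definition monomial (r : nat) := {ffun 'I_r -> nat}.
Definition mon_eval (r : nat) (u : monomial r) (x : 'I_r -> S) : S :=
  \prod_(i < r) x i ^+ u i.

Definition standard_set (r : nat) (G : monomial r -> Prop) : Prop :=
  forall u v : monomial r, G v -> (forall i, (u i <= v i)%N) -> G u.

(* liftings S/I -> S, represented as maps S -> S constant on classes mod I:
   sigma a = lifting of the class of a *)
Definition lifting (I : S -> Prop) (sigma : S -> S) : Prop :=
  [/\ forall a b, I (a - b) -> sigma a = sigma b,
      forall a, I (sigma a - a) & sigma 0 = 0].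

(* n-adically convergent sum over G (unconditional convergence) *)
Definition has_sum (n : S -> Prop) (r : nat) (G : monomial r -> Prop)
  (a : monomial r -> S) (f : S) : Prop :=
  forall t, exists F : seq (monomial r), (forall u, u \in F -> G u) /\
    forall H : seq (monomial r), uniq H -> (forall u, u \in H -> G u) ->
      {subset F <= H} -> idpow n t (f - \sum_(u <- H) a u).

Definition expandable (n I : S -> Prop) (r : nat) (x : 'I_r -> S)
  (G : monomial r -> Prop) : Prop :=
  forall sigma, lifting I sigma -> forall f : S,
    (exists fu : monomial r -> S, (forall u, G u -> exists s, fu u = sigma s) /\
        has_sum n G (fun u => fu u * mon_eval u x) f) /\
    (forall fu gu : monomial r -> S,
        (forall u, G u -> exists s, fu u = sigma s) ->
        (forall u, G u -> exists s, gu u = sigma s) ->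
        has_sum n G (fun u => fu u * mon_eval u x) f ->
        has_sum n G (fun u => gu u * mon_eval u x) f ->
        forall u, G u -> fu u = gu u).

(* ord : None stands for infinity *)
Definition ord (n : S -> Prop) (f : S) : option nat :=
  match excluded_middle_informative
          (exists t, idpow n t f /\ ~ idpow n t.+1 f) with
  | left H => Some (proj1_sig (constructive_indefinite_description _ H))
  | right _ => None
  end.

Definition oadd (a b : option nat) : option nat :=
  match a, b with Some a, Some b => Some (a + b)%N | _, _ => None end.
(* o * d with the convention infinity * 0 = 0 *)
Definition omuln (a : option nat) (d : nat) : option nat :=
  if d == 0%N then Some 0%N else
  match a with Some a => Some (a * d)%N | None => None end.

Definition spans_mod (k : fieldType) (iota : {rmorphism k -> S}) (J A : S -> Prop) :=
  forall s : S, exists cs : seq (k * S), (forall p, p \in cs -> A p.2) /\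
    J (s - \sum_(p <- cs) iota p.1 * p.2).
Definition indep_mod (k : fieldType) (iota : {rmorphism k -> S}) (J A : S -> Prop) :=
  forall (s : seq S) (c : S -> k), uniq s -> (forall a, a \in s -> A a) ->
    J (\sum_(a <- s) iota (c a) * a) -> forall a, a \in s -> c a = 0.
Definition basis_mod (k : fieldType) (iota : {rmorphism k -> S}) (J : S -> Prop) (s : seq S) :=
  [/\ uniq s, spans_mod iota J (fun a => a \in s) & indep_mod iota J (fun a => a \in s)].

Definition A1 (n : S -> Prop) (l r : nat) (f : 'I_l -> S) (x : 'I_r -> S)
  (G : monomial r -> Prop) (t : nat) (y : S) : Prop :=
  exists i u, G u /\ y = f i * mon_eval u x /\ ~ idpow n t (f i * mon_eval u x).

Definition A2 (n : S -> Prop) (l r : nat) (f : 'I_l -> S) (x : 'I_r -> S)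
  (G : monomial r -> Prop) (t : nat) (y : S) : Prop :=
  exists i u, G u /\ y = f i * mon_eval u x /\
    exists w, oadd (ord n (f i)) (\big[oadd/Some 0%N]_(j < r) omuln (ord n (x j)) (u j))
              = Some w /\ (w < t)%N.

End Defs.

(* Main.v *)
Require Import Defs.
From mathcomp Require Import all_boot all_order all_algebra.
From Stdlib Require Import ClassicalEpsilon Classical.
From mathcomp Require Import ring.
Import GRing.Theory.
Set Implicit Arguments. Unset Strict Implicit.
Local Open Scope ring_scope.

Lemma idJ0 (S : comNzRingType) (J : S -> Prop) : is_ideal J -> J 0.
Proof. by case. Qed.
Lemma idJD (S : comNzRingType) (J : S -> Prop) a b : is_ideal J -> J a -> J b -> J (a + b).
Proof. by case=> _ H _; apply: H. Qed.
Lemma idJMl (S : comNzRingType) (J : S -> Prop) a b : is_ideal J -> J b -> J (a * b).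
Proof. by case=> _ _ H; apply: H. Qed.
Lemma idJMr (S : comNzRingType) (J : S -> Prop) a b : is_ideal J -> J a -> J (a * b).
Proof. by move=> HJ Ha; rewrite mulrC; apply: idJMl. Qed.
Lemma idJN (S : comNzRingType) (J : S -> Prop) a : is_ideal J -> J a -> J (- a).
Proof. by move=> HJ Ha; rewrite -mulN1r; apply: idJMl. Qed.
Lemma idJB (S : comNzRingType) (J : S -> Prop) a b : is_ideal J -> J a -> J b -> J (a - b).
Proof. by move=> HJ Ha Hb; apply: idJD => //; apply: idJN. Qed.
Lemma idJsum (S : comNzRingType) (J : S -> Prop) (I : Type) (s : seq I) (P : pred I) (F : I -> S) :
  is_ideal J -> (forall i, P i -> J (F i)) -> J (\sum_(i <- s | P i) F i).
Proof.
move=> HJ HF; apply: (big_ind J); first exact: idJ0.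
  by move=> a b; apply: idJD.
exact: HF.
Qed.

Lemma idpow_ideal (S : comNzRingType) (n : S -> Prop) t : is_ideal n -> is_ideal (idpow n t).
Proof.
move=> Hn; elim: t => [|t IH]; first by split.
split.
- by exists [::]; rewrite big_nil.
- move=> a b [s1 [H1 ->]] [s2 [H2 ->]]; exists (s1 ++ s2); rewrite big_cat; split=> // p.
  by rewrite mem_cat => /orP [/H1|/H2].
- move=> a b [s [H ->]]; exists [seq (a * p.1, p.2) | p <- s]; split.
    move=> p /mapP [q /H [Hq1 Hq2] ->] /=; split=> //; exact: idJMl.
  by rewrite big_map mulr_sumr; apply: eq_bigr => p _; rewrite mulrA.
Qed.

Lemma idpow_succ (S : comNzRingType) (n : S -> Prop) t y : is_ideal n -> idpow n t.+1 y -> idpow n t y.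
Proof.
move=> Hn /= [s [H ->]]; rewrite big_seq; apply: idJsum; first exact: idpow_ideal.
by move=> p /H [H1 H2]; apply: idJMr => //; apply: idpow_ideal.
Qed.

Lemma idpow_mono (S : comNzRingType) (n : S -> Prop) p q y : is_ideal n -> (p <= q)%N -> idpow n q y -> idpow n p y.
Proof.
move=> Hn; elim: q => [|q IH]; first by rewrite leqn0 => /eqP ->.
rewrite leq_eqVlt => /orP [/eqP -> //|Hpq] Hy.
by apply: IH => //; apply: idpow_succ.
Qed.

Lemma idpow_mul (S : comNzRingType) (n : S -> Prop) p q a b : is_ideal n ->
  idpow n p a -> idpow n q b -> idpow n (p + q) (a * b).
Proof.
move=> Hn Ha; elim: q b => [|q IH] b /=.
  by rewrite addn0 => _; apply: idJMr => //; apply: idpow_ideal.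
move=> [s [H ->]]; rewrite addnS /=.
exists [seq (a * p.1, p.2) | p <- s]; split.
  by move=> p' /mapP [p0 /H [H1 H2] ->] /=; split => //; apply: IH.
by rewrite big_map mulr_sumr; apply: eq_bigr => p0 _; rewrite mulrA.
Qed.

Lemma idpow1 (S : comNzRingType) (n : S -> Prop) y : is_ideal n -> n y -> idpow n 1 y.
Proof.
move=> Hn Hy; exists [:: (1, y)]; split; last by rewrite big_cons big_nil mul1r addr0.
by move=> p; rewrite inE => /eqP ->.
Qed.

Lemma idpow1' (S : comNzRingType) (n : S -> Prop) y : is_ideal n -> idpow n 1 y -> n y.
Proof.
move=> Hn /= [s [H ->]]; rewrite big_seq; apply: idJsum => // p /H [_ H2].
by apply: idJMl.
Qed.

Lemma idpow_exp (S : comNzRingType) (n : S -> Prop) w d a : is_ideal n ->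
  idpow n w a -> idpow n (w * d) (a ^+ d).
Proof.
move=> Hn Ha; elim: d => [|d IH]; first by rewrite muln0.
by rewrite exprS mulnS; apply: idpow_mul.
Qed.


Lemma ord_Some (S : comNzRingType) (n : S -> Prop) a w : ord n a = Some w ->
  idpow n w a /\ ~ idpow n w.+1 a.
Proof.
rewrite /ord; case: excluded_middle_informative => [H|H] //.
by case: constructive_indefinite_description => w' Hw [<-].
Qed.

Lemma ord_None (S : comNzRingType) (n : S -> Prop) a : ord n a = None -> forall t, idpow n t a.
Proof.
rewrite /ord; case: excluded_middle_informative => [H|H] // _.
elim=> [//|t IH]; apply: NNPP => Hn; apply: H; by exists t.
Qed.

Definition good (S : comNzRingType) (n : S -> Prop) (o : option nat) (y : S) : Prop :=
  match o with Some w => idpow n w y | None => forall t, idpow n t y end.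

Lemma good_ord (S : comNzRingType) (n : S -> Prop) a : good n (ord n a) a.
Proof.
rewrite /good; case E: (ord n a) => [w|]; first by case: (ord_Some E).
exact: ord_None.
Qed.

Lemma good_oadd (S : comNzRingType) (n : S -> Prop) o1 o2 y1 y2 : is_ideal n ->
  good n o1 y1 -> good n o2 y2 -> good n (oadd o1 o2) (y1 * y2).
Proof.
move=> Hn; case: o1 => [w1|] H1; case: o2 => [w2|] H2 /=.
- exact: idpow_mul.
- by move=> t; apply: idJMl => //; apply: idpow_ideal.
- by move=> t; apply: idJMr => //; apply: idpow_ideal.
- by move=> t; apply: idJMr => //; apply: idpow_ideal.
Qed.

Lemma good_omuln (S : comNzRingType) (n : S -> Prop) a d : is_ideal n ->
  good n (omuln (ord n a) d) (a ^+ d).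
Proof.
move=> Hn; rewrite /omuln; case: eqP => [->|/eqP Hd] //=.
have := good_ord n a; case: (ord n a) => [w|] /= H.
  exact: idpow_exp.
move=> t; case: d Hd => [//|d] _; rewrite exprS; apply: idJMr => //; exact: idpow_ideal.
Qed.

Lemma good_big (S : comNzRingType) (n : S -> Prop) r (o : 'I_r -> option nat) (y : 'I_r -> S) :
  is_ideal n -> (forall j, good n (o j) (y j)) ->
  good n (\big[oadd/Some 0%N]_(j < r) o j) (\prod_(j < r) y j).
Proof.
move=> Hn H; apply: (big_ind2 (good n)) => //.
by move=> ? ? ? ?; apply: good_oadd.
Qed.

Lemma big_oadd_Some (I : eqType) (js : seq I) (P : pred I) (F : I -> option nat) v :
  \big[oadd/Some 0%N]_(j <- js | P j) F j = Some v ->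
  forall j, j \in js -> P j -> exists vj, F j = Some vj /\ (vj <= v)%N.
Proof.
elim: js v => [|a js IH] v; first by [].
rewrite big_cons; case Pa: (P a) => Hv j; rewrite inE => /orP [/eqP ->|Hj] Pj.
- move: Hv; case: (F a) => [va|] //; case: (\big[_/_]_(j <- js | P j) F j) => [vr|] //= [<-].
  by exists va; rewrite leq_addr.
- move: Hv; case: (F a) => [va|] //; case E: (\big[_/_]_(j <- js | P j) F j) => [vr|] //= [<-].
  have [vj [H1 H2]] := IH _ E j Hj Pj; exists vj; split => //; exact: leq_trans H2 (leq_addl _ _).
- by move: Pj; rewrite Pa.
- exact: IH.
Qed.

Lemma coeffs (k : fieldType) (S : comNzRingType) (iota : {rmorphism k -> S}) (s' : seq S)
  (cs : seq (k * S)) : (forall p, p \in cs -> p.2 \in s') ->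
  exists d : 'I_(size s') -> k,
    \sum_(p <- cs) iota p.1 * p.2 = \sum_(j < size s') iota (d j) * s'`_j.
Proof.
elim: cs => [|p cs IH] H.
  by exists (fun _ => 0); rewrite big_nil big1 // => j _; rewrite rmorph0 mul0r.
have [|d Hd] := IH; first by move=> q Hq; apply: H; rewrite inE Hq orbT.
have Hp : p.2 \in s' by apply: H; rewrite inE eqxx.
pose i0 : 'I_(size s') := Ordinal (eq_ind_r is_true Hp (index_mem p.2 s')).
exists (fun j => d j + (if j == i0 then p.1 else 0)).
rewrite big_cons Hd addrC.
rewrite [RHS](eq_bigr (fun j => iota (d j) * s'`_j + iota (if j == i0 then p.1 else 0) * s'`_j)); last by move=> j _; rewrite rmorphD mulrDl.
rewrite big_split /=; congr (_ + _).
rewrite (bigD1 i0) //= eqxx big1 ?addr0.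
  by rewrite nth_index.
by move=> j /negbTE ->; rewrite rmorph0 mul0r.
Qed.
Lemma ker_nonzero (k : fieldType) m p (M : 'M[k]_(m, p)) : (p < m)%N ->
  exists v : 'rV[k]_m, v != 0 /\ v *m M = 0.
Proof.
move=> Hpm.
have Hr : (0 < \rank (kermx M))%N.
  by rewrite mxrank_ker subn_gt0; apply: leq_ltn_trans (rank_leq_col M) Hpm.
have HK : kermx M != 0 by apply: contraTneq Hr => ->; rewrite mxrank0.
apply: NNPP => Hno; move/eqP: HK; apply; apply/row_matrixP => i.
rewrite row0; apply: NNPP => Hi; apply: Hno; exists (row i (kermx M)); split.
  by apply/eqP.
by rewrite -row_mul mulmx_ker row0.
Qed.

Lemma dim_le (k : fieldType) (S : comNzRingType) (iota : {rmorphism k -> S}) (J : S -> Prop)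
  (s s' : seq S) : is_ideal J -> uniq s -> spans_mod iota J (fun a => a \in s') ->
  indep_mod iota J (fun a => a \in s) -> (size s <= size s')%N.
Proof.
move=> HJ Hu Hsp Hind.
have Hd : forall a, exists d : 'I_(size s') -> k, J (a - \sum_(j < size s') iota (d j) * s'`_j).
  move=> a; have [cs [Hcs HJa]] := Hsp a; have [d Hd] := coeffs iota Hcs.
  by exists d; rewrite -Hd.
pose D a := proj1_sig (constructive_indefinite_description _ (Hd a)).
have HD a : J (a - \sum_(j < size s') iota (D a j) * s'`_j).
  exact: (proj2_sig (constructive_indefinite_description _ (Hd a))).
rewrite leqNgt; apply/negP => Hlt.
pose M : 'M[k]_(size s, size s') := \matrix_(i, j) D s`_i j.
have [v [Hv0 HvM]] := ker_nonzero M Hlt.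
pose c a := \sum_(i < size s | s`_i == a) v 0 i.
have Hc : forall i : 'I_(size s), c s`_i = v 0 i.
  move=> i; rewrite /c (bigD1 i) //= big1 ?addr0 // => j /andP [/eqP Hj Hji].
  move: Hji; have := nth_uniq 0 (ltn_ord j) (ltn_ord i) Hu.
  by rewrite Hj eqxx => /esym /eqP Hij; rewrite -val_eqE /= Hij eqxx.
have HJsum : J (\sum_(a <- s) iota (c a) * a).
  rewrite (big_nth 0) big_mkord.
  rewrite (eq_bigr (fun i : 'I_(size s) => iota (v 0 i) * s`_i)); last by move=> i _; rewrite Hc.
  set X := \sum_(i < size s) _.
  pose Y := \sum_(i < size s) iota (v 0 i) * \sum_(j < size s') iota (M i j) * s'`_j.
  have HY : Y = 0.
    rewrite /Y; under eq_bigr do rewrite mulr_sumr.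
    rewrite exchange_big /=.
    rewrite (eq_bigr (fun j : 'I_(size s') => iota ((v *m M) 0 j) * s'`_j)).
      by rewrite HvM big1 // => j _; rewrite mxE rmorph0 mul0r.
    move=> j _; rewrite mxE rmorph_sum mulr_suml; apply: eq_bigr => i _.
    by rewrite rmorphM mulrA.
  suff : J (X - Y) by rewrite HY subr0.
  rewrite /X /Y -sumrB; apply: idJsum => // i _.
  rewrite -mulrBr; apply: idJMl => //.
  rewrite (eq_bigr (fun j : 'I_(size s') => iota (D s`_i j) * s'`_j)) //.
  by move=> j _; rewrite mxE.
have Hc0 := Hind s c Hu (fun a Ha => Ha) HJsum.
move/eqP: Hv0; apply; apply/rowP => i; rewrite mxE -Hc; apply: Hc0.
exact: mem_nth.
Qed.

Lemma filterJ (k : fieldType) (S : comNzRingType) (iota : {rmorphism k -> S}) (J : S -> Prop)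
  (ps : seq (k * S)) : is_ideal J -> exists cs : seq (k * S),
  (forall p, p \in cs -> p \in ps /\ ~ J p.2) /\
  J (\sum_(p <- ps) iota p.1 * p.2 - \sum_(p <- cs) iota p.1 * p.2).
Proof.
move=> HJ; elim: ps => [|p ps [cs [H1 H2]]].
  by exists [::]; split => //; rewrite !big_nil subr0; apply: idJ0.
case: (classic (J p.2)) => Hp.
- exists cs; split.
    by move=> q /H1 [Hq Hq']; rewrite inE Hq orbT.
  rewrite big_cons -addrA; apply: idJD => //; exact: idJMl.
- exists (p :: cs); split.
    move=> q; rewrite inE => /orP [/eqP ->|/H1 [Hq Hq']]; first by rewrite inE eqxx.
    by rewrite inE Hq orbT.
  by rewrite !big_cons opprD addrACA subrr add0r.
Qed.

Definition pb (P : Prop) : bool := if excluded_middle_informative P then true else false.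
Lemma pbP (P : Prop) : pb P <-> P.
Proof. by rewrite /pb; case: excluded_middle_informative. Qed.

Theorem corollary4p2 (k : fieldType) (S : comNzRingType) (iota : {rmorphism k -> S})
  (n : S -> Prop)
  (Hloc : is_local n) (Hnoeth : noetherian S) (Hcompl : adic_complete n)
  (Hcoef : coefficient_field iota n)
  (r : nat) (G : monomial r -> Prop) (HG : standard_set G)
  (I : S -> Prop) (HI : is_primary_for n I) (x : 'I_r -> S) (Hgen : generates x I)
  (Hexp : expandable n I x G)
  (l : nat) (f : 'I_l -> S)
  (Hfspan : forall s : S, exists c : 'I_l -> k, I (s - \sum_(i < l) iota (c i) * f i))
  (Hfindep : forall c : 'I_l -> k, I (\sum_(i < l) iota (c i) * f i) -> forall i, c i = 0)
  (t : nat) (Ht : (0 < t)%N) :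
  [/\ spans_mod iota (idpow n t) (A1 n f x G t),
      (forall y, A1 n f x G t y -> A2 n f x G t y) /\ spans_mod iota (idpow n t) (A2 n f x G t)
    & indep_mod iota (idpow n t) (A2 n f x G t) ->
      exists s : seq S, [/\ uniq s, (forall y, A2 n f x G t y <-> y \in s),
        basis_mod iota (idpow n t) s
        & forall s', basis_mod iota (idpow n t) s' -> size s' = size s]].
Proof.
have Hn : is_ideal n by case: Hloc => [[]].
have HIi : is_ideal I by case: HI => [[[]]].
have HIn : forall a, I a -> n a.
  by move=> a Ha; apply/(proj2 HI a); exists 1%N; rewrite expr1.
have Hnt : is_ideal (idpow n t) by apply: idpow_ideal.
have Hspan1 : spans_mod iota (idpow n t) (A1 n f x G t).
  pose C a := proj1_sig (constructive_indefinite_description _ (Hfspan a)).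
  have HC a : I (a - \sum_(i < l) iota (C a i) * f i).
    exact: (proj2_sig (constructive_indefinite_description _ (Hfspan a))).
  pose sigma a := \sum_(i < l) iota (C a i) * f i.
  have Hlift : lifting I sigma.
    split.
    - move=> a b Hab.
      have HIab : I (sigma a - sigma b).
        have -> : sigma a - sigma b = (b - sigma b) - (a - sigma a) + (a - b).
          by ring.
        by apply: idJD => //; apply: idJB.
      have HIab' : I (\sum_(i < l) iota (C a i - C b i) * f i).
        rewrite (eq_bigr (fun i => iota (C a i) * f i - iota (C b i) * f i)).
          by rewrite sumrB.
        by move=> i _; rewrite rmorphB mulrBl.
      have Heq := Hfindep _ HIab'.
      rewrite /sigma; apply: eq_bigr => i _; congr (iota _ * _).
      by apply/eqP; rewrite -subr_eq0 Heq.
    - by move=> a; rewrite -opprB; apply: idJN.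
    - have H0 : I (sigma 0) by have := idJN HIi (HC 0); rewrite sub0r opprK.
      have Heq := Hfindep _ H0.
      by rewrite /sigma big1 // => i _; rewrite Heq rmorph0 mul0r.
  move=> s.
  have [[fu [Hfu Hsum]] _] := Hexp sigma Hlift s.
  have [F [HF HFt]] := Hsum t.
  have Hs := HFt (undup F) (undup_uniq F)
    (fun u Hu => HF u (eq_ind _ is_true Hu _ (mem_undup F u))) (fun u Hu => eq_ind_r is_true Hu (mem_undup F u)).
  have Hps : forall H : seq (monomial r), (forall u, u \in H -> G u) ->
     exists ps : seq (k * S), (forall p, p \in ps -> exists i u, G u /\ p.2 = f i * mon_eval u x) /\
     \sum_(u <- H) fu u * mon_eval u x = \sum_(p <- ps) iota p.1 * p.2.
    elim=> [|u H IH] HH.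
      by exists [::]; rewrite !big_nil.
    have Gu : G u by apply: HH; rewrite inE eqxx.
    have [|ps [Hps1 Hps2]] := IH; first by move=> v Hv; apply: HH; rewrite inE Hv orbT.
    have [su Hsu] := Hfu u Gu.
    exists ([seq (C su i, f i * mon_eval u x) | i <- index_enum 'I_l] ++ ps); split.
      move=> p; rewrite mem_cat => /orP [/mapP [i _ ->]|/Hps1 //].
      by exists i, u.
    rewrite big_cat big_cons Hps2 big_map; congr (_ + _).
    by rewrite Hsu /sigma mulr_suml; apply: eq_bigr => i _; rewrite mulrA.
  have [|ps [Hps1 Hps2]] := Hps (undup F).
    by move=> u; rewrite mem_undup; apply: HF.
  have [cs [Hcs1 Hcs2]] := filterJ iota ps Hnt.
  exists cs; split.
    move=> p /Hcs1 [/Hps1 [i [u [Gu Hp]]] Hnp].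
    by exists i, u; split => //; split => //; rewrite -Hp.
  have -> : s - \sum_(p <- cs) iota p.1 * p.2 =
    (s - \sum_(u <- undup F) fu u * mon_eval u x) +
    (\sum_(p <- ps) iota p.1 * p.2 - \sum_(p <- cs) iota p.1 * p.2).
    by rewrite Hps2 addrA subrK.
  exact: idJD.
have H12 : forall y, A1 n f x G t y -> A2 n f x G t y.
  move=> y [i [u [Gu [-> Hnot]]]]; exists i, u; split => //; split => //.
  have Hg := good_oadd Hn (good_ord n (f i))
     (@good_big _ n r (fun j => omuln (ord n (x j)) (u j)) (fun j => x j ^+ u j) Hn
        (fun j => good_omuln (x j) (u j) Hn)).
  move: Hg; rewrite /mon_eval.
  case: (oadd _ _) => [w|] /= Hg.
    exists w; split => //; rewrite ltnNge; apply/negP => Hle; apply: Hnot.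
    exact: idpow_mono Hle Hg.
  by exfalso; apply: Hnot; apply: Hg.
have Hspan2 : spans_mod iota (idpow n t) (A2 n f x G t).
  move=> s; have [cs [H1 H2]] := Hspan1 s; exists cs; split => // p Hp.
  exact/H12/H1.
split => // Hind.
pose emb (v : {ffun 'I_r -> 'I_t}) : monomial r := [ffun j => nat_of_ord (v j)].
pose g (p : 'I_l * {ffun 'I_r -> 'I_t}) := f p.1 * mon_eval (emb p.2) x.
pose s := undup [seq y <- codom g | pb (A2 n f x G t y)].
have Hxn : forall j, idpow n 1 (x j).
  move=> j; apply: idpow1 => //; apply: HIn; apply/(Hgen (x j)).
  exists (fun i => (i == j)%:R).
  rewrite (bigD1 j) //= eqxx mul1r big1 ?addr0 // => i /negbTE ->.
  by rewrite mul0r.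
have HA2s : forall y, A2 n f x G t y <-> y \in s.
  move=> y; rewrite mem_undup mem_filter; split; last first.
    by case/andP => /pbP.
  move=> HA; apply/andP; split; first by apply/pbP.
  case: HA => i [u [Gu [-> [w [Hw Hwt]]]]].
  have Hb : forall j, (u j < t)%N.
    move=> j; move: Hw; case: (ord n (f i)) => [a|] //.
    case E: (\big[oadd/Some 0%N]_(j0 < r) _) => [b|] //= [Hab].
    have [vj [Hvj Hvjb]] := big_oadd_Some E (mem_index_enum j) (erefl true).
    move: Hvj; rewrite /omuln; case: eqP => [->|/eqP Huj] // .
    case Eo: (ord n (x j)) => [c|] // [Hc].
    have Hc1 : (0 < c)%N.
      rewrite lt0n; apply/eqP => Hc0; move: Eo; rewrite Hc0 => /ord_Some [_ ].
      by apply; apply: Hxn.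
    apply: leq_ltn_trans Hwt; rewrite -Hab; apply: leq_trans (leq_addl a b).
    apply: leq_trans Hvjb; rewrite -Hc; exact: leq_pmull.
  pose v : {ffun 'I_r -> 'I_t} := [ffun j => Ordinal (Hb j)].
  have -> : u = emb v by apply/ffunP => j; rewrite !ffunE.
  exact: (codom_f g (i, v)).
exists s; split => //.
- exact: undup_uniq.
- split; first exact: undup_uniq.
  + move=> y; have [cs [H1 H2]] := Hspan2 y; exists cs; split => // p Hp.
    exact/HA2s/H1.
  + move=> s0 c Hu Hs0; apply: Hind => // a Ha; exact/HA2s/Hs0.
- move=> s' [Hu' Hsp' Hind'].
  have Hsps : spans_mod iota (idpow n t) (fun a => a \in s).
    move=> y; have [cs [H1 H2]] := Hspan2 y; exists cs; split => // p Hp.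
    exact/HA2s/H1.
  have Hinds : indep_mod iota (idpow n t) (fun a => a \in s).
    by move=> s0 c Hu Hs0; apply: Hind => // a Ha; exact/HA2s/Hs0.
  apply/eqP; rewrite eqn_leq; apply/andP; split.
    exact: (@dim_le k S iota (idpow n t) s' s Hnt Hu' Hsps Hind').
  exact: (@dim_le k S iota (idpow n t) s s' Hnt (undup_uniq _) Hsp' Hinds).
Qed.
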